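(* Let $p\in\{1,2\}$, let $s\ge 1$ be an integer ($s\ge 2$ if $p=2$), let $\varepsilon\ge 0$, and let the coefficients $\omega_0,\omega_1,b_j,a_j,\mu_j,\nu_j,\kappa_j,\gamma_j,c_j$ and the polynomials $R_k$ be as defined in the context. Let $A\in\mathbb{R}^{n\times n}$, $\Delta t>0$, let $\bm{r}_1,\dots,\bm{r}_s\in\mathbb{R}^n$, and define $$\bm{d}_0=\bm{0},\qquad \bm{d}_1=\bm{r}_1,\qquad \bm{d}_j=\nu_j\bm{d}_{j-1}+\kappa_j\bm{d}_{j-2}+\mu_j\,\Delta t A\bm{d}_{j-1}+\bm{r}_j,\quad j=2,\dots,s.$$ Then: (i) With $I$ the $n\times n$ identity matrix, $$\bm{d}_k=\sum_{j=1}^k\frac{b_k}{b_j}U_{k-j}(\omega_0 I+\omega_1\Delta t A)\,\bm{r}_j,\qquad k=1,\dots,s.$$ (ii) For $k=1,\dots,s$, the following identities hold (for $z\neq 0$, and hence as polynomial identities, so that the left-hand sides are polynomials in $z$): $$\overline{R}_k(z):=\frac{R_k(z)-1}{z}=\sum_{j=1}^k\frac{b_k}{b_j}U_{k-j}(\omega_0+\omega_1 z)(\mu_j+\gamma_j),$$ $$\widetilde{R}_k(z):=\frac{R_k(z)-1-c_kz}{z^2}=\sum_{j=2}^k\frac{b_k}{b_j}U_{k-j}(\omega_0+\omega_1 z)\,\mu_j c_{j-1}.$$ (iii) If $\bm{r}\in\mathbb{R}^n$ and $\bm{r}_j=(\mu_j+\gamma_j)\bm{r}$ for $j=1,\dots,s$,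 then $\bm{d}_k=\overline{R}_k(\Delta t A)\bm{r}$ for $k=1,\dots,s$.
   Context: Chebyshev polynomials: $T_0(x)=1$, $T_1(x)=x$, $T_j(x)=2xT_{j-1}(x)-T_{j-2}(x)$; $U_0(x)=1$, $U_1(x)=2x$, $U_j(x)=2xU_{j-1}(x)-U_{j-2}(x)$ for $j\ge 2$. For a square matrix $M$, $U_j(M)$ denotes the matrix polynomial. Runge–Kutta–Chebyshev (RKC) coefficients of order $p\in\{1,2\}$ with $s$ stages and damping $\varepsilon\ge0$: $\omega_0=1+\varepsilon/s^2$. If $p=1$: $\omega_1=T_s(\omega_0)/T_s'(\omega_0)$ and $b_j=1/T_j(\omega_0)$ for $j=0,\dots,s$. If $p=2$: $\omega_1=T_s'(\omega_0)/T_s''(\omega_0)$, $b_j=T_j''(\omega_0)/T_j'(\omega_0)^2$ for $j=2,\dots,s$, and $b_0=b_1=b_2$. In both cases $a_j=1-b_jT_j(\omega_0)$ for $j=0,\dots,s$; $\mu_1=b_1\omega_1$, $\gamma_1=0$, and for $j=2,\dots,s$: $\mu_j=2\omega_1b_j/b_{j-1}$, $\nu_j=2\omega_0 b_j/b_{j-1}$, $\kappa_j=-b_j/b_{j-2}$, $\gamma_j=-\mu_j a_{j-1}$. Also $c_0=0$, $c_1=\mu_1$, $c_j=\nu_jc_{j-1}+\kappa_jc_{j-2}+\mu_j+\gamma_j$ for $j=2,\dots,s$. The internal stability polynomials are $R_k(z)=a_k+b_kT_k(\omega_0+\omega_1 z)$, $k=0,\dots,s$. *)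

(* Defs.v *)
From HB Require Import structures.
From mathcomp Require Import all_boot all_order all_algebra.
Set Implicit Arguments. Unset Strict Implicit. Unset Printing Implicit Defensive.
Import Order.TTheory GRing.Theory Num.Theory.
Local Open Scope ring_scope.

Section RKC.
Variable R : realFieldType.

Fixpoint chebT (j : nat) : {poly R} :=
  match j with
  | 0 => 1
  | 1 => 'X
  | (m1.+1 as m2).+1 => 2%:R *: 'X * chebT m2 - chebT m1
  end.

Fixpoint chebU (j : nat) : {poly R} :=
  match j with
  | 0 => 1
  | 1 => 2%:R *: 'X
  | (m1.+1 as m2).+1 => 2%:R *: 'X * chebU m2 - chebU m1
  end.

Fixpoint mxpow (n : nat) (M : 'M[R]_n) (k : nat) : 'M[R]_n :=
  match k with
  | 0 => 1%:M
  | k.+1 => M *m mxpow M k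
  end.

Definition mxpeval (n : nat) (q : {poly R}) (M : 'M[R]_n) : 'M[R]_n :=
  \sum_(i < size q) q`_i *: mxpow M i.

Variables (p s : nat) (eps : R).

Definition rkc_w0 : R := 1 + eps / (s%:R ^+ 2).
Definition Tv (j : nat) : R := (chebT j).[rkc_w0].
Definition Td (j : nat) : R := (chebT j)^`().[rkc_w0].
Definition Tdd (j : nat) : R := (chebT j)^`(2).[rkc_w0].

Definition rkc_w1 : R := if p == 1%N then Tv s / Td s else Td s / Tdd s.

Definition rkc_b (j : nat) : R :=
  if p == 1%N then 1 / Tv j
  else if (j < 2)%N then Tdd 2 / (Td 2) ^+ 2 else Tdd j / (Td j) ^+ 2.

Definition rkc_a (j : nat) : R := 1 - rkc_b j * Tv j.

Definition rkc_mu (j : nat) : R :=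
  if j == 1%N then rkc_b 1 * rkc_w1 else 2%:R * rkc_w1 * rkc_b j / rkc_b j.-1.
Definition rkc_nu (j : nat) : R := 2%:R * rkc_w0 * rkc_b j / rkc_b j.-1.
Definition rkc_kappa (j : nat) : R := - (rkc_b j / rkc_b (j - 2)).
Definition rkc_gamma (j : nat) : R :=
  if j == 1%N then 0 else - (rkc_mu j * rkc_a j.-1).

Fixpoint rkc_c (j : nat) : R :=
  match j with
  | 0 => 0
  | 1 => rkc_mu 1
  | (m1.+1 as m2).+1 =>
      rkc_nu j * rkc_c m2 + rkc_kappa j * rkc_c m1 + rkc_mu j + rkc_gamma j
  end.

Definition rkc_R (k : nat) : {poly R} :=
  (rkc_a k)%:P + rkc_b k *: (chebT k \Po (rkc_w0%:P + rkc_w1 *: 'X)).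

Definition rkc_Rbar (k : nat) : {poly R} := (rkc_R k - 1) %/ 'X.
Definition rkc_Rtilde (k : nat) : {poly R} :=
  (rkc_R k - 1 - rkc_c k *: 'X) %/ 'X^2.

Fixpoint rkc_d (n : nat) (A : 'M[R]_n) (dt : R) (r : nat -> 'cV[R]_n) (j : nat)
  : 'cV[R]_n :=
  match j with
  | 0 => 0
  | 1 => r 1%N
  | (m1.+1 as m2).+1 =>
      rkc_nu j *: rkc_d A dt r m2 + rkc_kappa j *: rkc_d A dt r m1
      + rkc_mu j *: ((dt *: A) *m rkc_d A dt r m2) + r j
  end.

End RKC.

(* Main.v *)
Require Import Defs.
From HB Require Import structures.
From mathcomp Require Import all_boot all_order all_algebra ring lra zify.
Import Order.TTheory GRing.Theory Num.Theory.
Local Open Scope ring_scope.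

Section Pos.
Variable R : realFieldType.

Lemma mono_rec (x : R) (f g : nat -> R) : 1 <= x -> (forall j, 0 <= g j) ->
  (forall j, f j.+2 = 2%:R * x * f j.+1 - f j + g j) -> 0 <= f 0 -> f 0 <= f 1 ->
  forall j, 0 <= f j /\ f j <= f j.+1.
Proof.
move=> hx hg hf h0 h01; elim=> [|j [IH1 IH2]]; first by [].
have h1 : 0 <= f j.+1 by apply: le_trans IH2.
split=> //; rewrite hf; have := hg j; nra.
Qed.

Lemma mono_le (f : nat -> R) : (forall j, f j <= f j.+1) -> forall i j, (i <= j)%N -> f i <= f j.
Proof.
move=> hf i j /subnKC <-; elim: (j - i)%N => [|k IH]; first by rewrite addn0.
by rewrite addnS; apply: le_trans IH (hf _).
Qed.

Variables (s : nat) (eps : R).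
Hypothesis heps : 0 <= eps.

Lemma w0_ge1 : 1 <= rkc_w0 s eps.
Proof.
rewrite /rkc_w0; have : 0 <= eps / s%:R ^+ 2 by apply: divr_ge0 => //; apply: exprn_ge0.
lra.
Qed.

Lemma chebT_SS j : chebT R j.+2 = 2%:R *: 'X * chebT R j.+1 - chebT R j.
Proof. by []. Qed.

Lemma dchebT_SS j : (chebT R j.+2)^`() = 2%:R *: chebT R j.+1 + 2%:R *: 'X * (chebT R j.+1)^`() - (chebT R j)^`().
Proof.
rewrite chebT_SS derivB derivM derivZ derivX.
move: (chebT R j.+1) (chebT R j) => a b.
rewrite -!mul_polyC; ring.
Qed.

Lemma ddchebT_SS j : (chebT R j.+2)^`(2) = 4%:R *: (chebT R j.+1)^`() + 2%:R *: 'X * (chebT R j.+1)^`(2) - (chebT R j)^`(2).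
Proof.
have E : forall q : {poly R}, q^`(2) = q^`()^`() by [].
rewrite !E dchebT_SS derivB derivD derivM !derivZ derivX.
move: (chebT R j.+1) (chebT R j) => a b.
rewrite -!mul_polyC; ring.
Qed.

Let w0 := rkc_w0 s eps.
Lemma deriv1' : (1 : {poly R})^`() = 0. Proof. by rewrite -polyC1 derivC. Qed.

Lemma Tv_SS j : Tv s eps j.+2 = 2%:R * w0 * Tv s eps j.+1 - Tv s eps j.
Proof. by rewrite /Tv chebT_SS !hornerE. Qed.

Lemma Tv_ge1 j : 1 <= Tv s eps j.
Proof.
have hx := w0_ge1.
have H := @mono_rec w0 (Tv s eps) (fun _ => 0) hx (fun _ => lexx 0).
have {}H : forall j, 0 <= Tv s eps j /\ Tv s eps j <= Tv s eps j.+1.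
  apply: H.
  - by move=> i; rewrite Tv_SS addr0 /w0.
  - by rewrite /Tv /= hornerE.
  - by rewrite /Tv /= !hornerE.
have -> : 1 = Tv s eps 0 by rewrite /Tv /= hornerE.
by apply: mono_le => // i; case: (H i).
Qed.

Lemma Td_ge1 j : (1 <= j)%N -> 1 <= Td s eps j.
Proof.
move=> hj.
have hx := w0_ge1.
have H := @mono_rec w0 (Td s eps) (fun j => 2%:R * Tv s eps j.+1) hx.
have {}H : forall j, 0 <= Td s eps j /\ Td s eps j <= Td s eps j.+1.
  apply: H.
  - by move=> i; have := Tv_ge1 i.+1; lra.
  - by move=> i; rewrite /Td dchebT_SS !hornerE /Tv /w0; ring.
  - by rewrite /Td /= deriv1' hornerE.
  - by rewrite /Td /= deriv1' derivX !hornerE.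
have -> : 1 = Td s eps 1 by rewrite /Td /= derivX hornerE.
by apply: mono_le => // i; case: (H i).
Qed.

Lemma Tdd_ge4 j : (2 <= j)%N -> 4%:R <= Tdd s eps j.
Proof.
move=> hj.
have hx := w0_ge1.
have H := @mono_rec w0 (Tdd s eps) (fun j => 4%:R * Td s eps j.+1) hx.
have {}H : forall j, 0 <= Tdd s eps j /\ Tdd s eps j <= Tdd s eps j.+1.
  apply: H.
  - by move=> i; have := (@Td_ge1 i.+1 (ltn0Sn i)); lra.
  - by move=> i; rewrite /Tdd ddchebT_SS !hornerE /Td /w0; ring.
  - by rewrite /Tdd /derivn /= deriv1' deriv0 hornerE.
  - by rewrite /Tdd /derivn /= deriv1' derivX deriv1' deriv0 !hornerE.
have -> : 4%:R = Tdd s eps 2.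
  by rewrite /Tdd ddchebT_SS /derivn /= !derivX !deriv1' !deriv0 !hornerE; ring.
by apply: mono_le => // i; case: (H i).
Qed.

Lemma b_gt0 p j : 0 < rkc_b p s eps j.
Proof.
rewrite /rkc_b; case: ifP => _.
  by rewrite div1r invr_gt0; have := Tv_ge1 j; lra.
have t2 := @Td_ge1 2 isT.
have t22 := @Tdd_ge4 2 isT.
case: ifP => hj.
  apply: divr_gt0; [lra | apply: exprn_gt0; lra].
have hj2 : (2 <= j)%N by rewrite leqNgt hj.
have := @Tdd_ge4 j hj2; have := @Td_ge1 j (leq_trans (isT : (1 <= 2)%N) hj2) => *.
apply: divr_gt0; [lra | apply: exprn_gt0; lra].
Qed.

Lemma b_neq0 p j : rkc_b p s eps j != 0.
Proof. by rewrite gt_eqF // b_gt0. Qed.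

End Pos.

Section Gen.
Variable R : realFieldType.
Variable V : lmodType R.

Lemma uniq_rec (F : nat -> V -> V -> V) (f g : nat -> V) (K : nat) :
  f 0 = g 0 -> f 1 = g 1 ->
  (forall j, (j.+2 <= K)%N -> f j.+2 = F j (f j.+1) (f j)) ->
  (forall j, (j.+2 <= K)%N -> g j.+2 = F j (g j.+1) (g j)) ->
  forall k, (k <= K)%N -> f k = g k.
Proof.
move=> h0 h1 hf hg.
have H : forall k, (k.+1 <= K)%N -> f k = g k /\ f k.+1 = g k.+1.
  elim=> [|k IH] hk; first by [].
  have [e1 e2] := IH (ltnW hk); split=> //.
  by rewrite hf // hg // e1 e2.
move=> [|k] hk; first by [].
by case: (H k hk).
Qed.

Variables (w0 w1 : R) (Mop : V -> V).
Hypothesis MopD : forall x y, Mop (x + y) = Mop x + Mop y.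
Hypothesis MopZ : forall a x, Mop (a *: x) = a *: Mop x.
Let N v := w0 *: v + w1 *: Mop v.

Lemma Mop0 : Mop 0 = 0.
Proof. by have := MopZ 0 0; rewrite !scale0r. Qed.

Lemma ND x y : N (x + y) = N x + N y.
Proof. by rewrite /N MopD !scalerDr addrACA. Qed.

Lemma NZ a x : N (a *: x) = a *: N x.
Proof. by rewrite /N MopZ scalerDr !scalerA mulrC [w1 * a]mulrC. Qed.

Lemma N0 : N 0 = 0.
Proof. by rewrite /N Mop0 !scaler0 addr0. Qed.

Variable (u : nat -> V -> V).
Hypotheses (hu0 : forall v, u 0 v = v) (hu1 : forall v, u 1 v = 2%:R *: N v)
  (hu2 : forall i v, u i.+2 v = 2%:R *: N (u i.+1 v) - u i v).
Variable (b : nat -> R).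
Hypothesis hb : forall j, b j != 0.
Variables (r : nat -> V) (d : nat -> V).
Hypotheses (hd0 : d 0 = 0) (hd1 : d 1 = r 1%N)
  (hd : forall j, d j.+2 = (b j.+2 / b j.+1) *: (2%:R *: N (d j.+1)) - (b j.+2 / b j) *: d j + r j.+2).

Lemma sum_form k : d k = \sum_(1 <= j < k.+1) (b k / b j) *: u (k - j)%N (r j).
Proof.
suff H : forall k, d k = \sum_(1 <= j < k.+1) (b k / b j) *: u (k - j)%N (r j)
  /\ d k.+1 = \sum_(1 <= j < k.+2) (b k.+1 / b j) *: u (k.+1 - j)%N (r j).
  by case: (H k).
clear k; elim=> [|k [IH1 IH2]].
  split; first by rewrite hd0 big_geq.
  by rewrite hd1 big_nat1 divff // scale1r subnn hu0.
split=> //.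
rewrite hd IH1 IH2.
have Nsum : forall (I : Type) (rr : seq I) (P : pred I) (F : I -> V),
    N (\sum_(i <- rr | P i) F i) = \sum_(i <- rr | P i) N (F i).
  by move=> I rr P F; apply: (big_morph N ND N0).
rewrite Nsum (big_nat_recr k.+1) //= (big_nat_recr k.+2) //= (big_nat_recr k.+1) //=.
rewrite subnn subSnn hu0.
have -> : (k.+2 - k.+2 = 0)%N by rewrite subnn.
rewrite hu0 divff // scale1r hu1.
rewrite divff // scale1r.
have E : \sum_(1 <= i < k.+1) (b k.+2 / b i) *: u (k.+2 - i)%N (r i) =
   (b k.+2 / b k.+1) *: (2%:R *: \sum_(1 <= i < k.+1) N ((b k.+1 / b i) *: u (k.+1 - i)%N (r i)))
   - (b k.+2 / b k) *: \sum_(1 <= i < k.+1) (b k / b i) *: u (k - i)%N (r i).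
  rewrite !scaler_sumr -sumrB; apply: eq_big_nat => i /andP [_ hi].
  have -> : (k.+1 - i = (k - i).+1)%N by lia.
  have -> : (k.+2 - i = (k - i).+2)%N by lia.
  rewrite hu2 NZ !scalerA scalerBr !scalerA.
  congr (_ *: _ - _ *: _); field; rewrite ?hb //.
rewrite E scalerDr scalerDr; set X1 := (_ *: (2%:R *: \sum_(_ <= _ < _) _)).
rewrite -!addrA; congr (_ + _); rewrite addrC -!addrA; congr (_ + _).
by rewrite addrC.
Qed.

End Gen.

Section Mx.
Variables (R : realFieldType) (n : nat) (M : 'M[R]_n).

Lemma mxpeval_wide (q : {poly R}) {K} : (size q <= K)%N ->
  mxpeval q M = \sum_(i < K) q`_i *: mxpow M i.
Proof.
move=> hK; rewrite /mxpeval (big_ord_widen K (fun i => q`_i *: mxpow M i) hK) big_mkcond.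
apply: eq_bigr => i _; case: ifP => // /negbT; rewrite -leqNgt => hi.
by rewrite nth_default // scale0r.
Qed.

Lemma mxpevalD (p q : {poly R}) : mxpeval (p + q) M = mxpeval p M + mxpeval q M.
Proof.
have hs := size_polyD p q.
rewrite !(@mxpeval_wide _ (maxn (size p) (size q))) ?leq_maxl ?leq_maxr //.
by rewrite -big_split; apply: eq_bigr => i _; rewrite coefD scalerDl.
Qed.

Lemma mxpevalZ a (q : {poly R}) : mxpeval (a *: q) M = a *: mxpeval q M.
Proof.
rewrite !(@mxpeval_wide _ (size q)) ?size_scale_leq //.
by rewrite scaler_sumr; apply: eq_bigr => i _; rewrite coefZ scalerA.
Qed.

Lemma mxpevalN (q : {poly R}) : mxpeval (- q) M = - mxpeval q M.
Proof. by rewrite -scaleN1r mxpevalZ scaleN1r. Qed.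

Lemma mxpevalB (p q : {poly R}) : mxpeval (p - q) M = mxpeval p M - mxpeval q M.
Proof. by rewrite mxpevalD mxpevalN. Qed.

Lemma mxpevalXM (q : {poly R}) : mxpeval ('X * q) M = M *m mxpeval q M.
Proof.
have hs : (size ('X * q)%R <= (size q).+1)%N.
  by apply: leq_trans (size_polyMleq _ _) _; rewrite size_polyX.
rewrite (mxpeval_wide _ hs) big_ord_recl coefXM eqxx scale0r add0r.
rewrite /mxpeval mulmx_sumr; apply: eq_bigr => i _.
by rewrite coefXM /= -scalemxAr.
Qed.

Lemma mxpevalC c : mxpeval c%:P M = c *: 1%:M.
Proof.
rewrite (@mxpeval_wide _ (1)) ?size_polyC_leq1 //.
by rewrite big_ord1 coefC.
Qed.

Lemma mxpeval1 : mxpeval 1 M = 1%:M.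
Proof. by rewrite -polyC1 mxpevalC scale1r. Qed.

Lemma mxpeval0 : mxpeval 0 M = 0.
Proof. by rewrite /mxpeval size_poly0 big_ord0. Qed.

End Mx.

Section Main.
Variables (R : realFieldType) (p s : nat) (eps : R).
Hypothesis heps : 0 <= eps.

Local Notation b := (rkc_b p s eps).
Local Notation nu := (rkc_nu p s eps).
Local Notation kap := (rkc_kappa p s eps).
Local Notation mu := (rkc_mu p s eps).
Local Notation gam := (rkc_gamma p s eps).
Local Notation c := (rkc_c p s eps).
Local Notation w0 := (rkc_w0 s eps).
Local Notation w1 := (rkc_w1 p s eps).
Local Notation Y := (w0%:P + w1 *: 'X : {poly R}).

Lemma hb j : b j != 0. Proof. exact: b_neq0. Qed.

Lemma nuE j : nu j.+2 = 2%:R * w0 * b j.+2 / b j.+1. Proof. by []. Qed.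
Lemma kapE j : kap j.+2 = - (b j.+2 / b j). Proof. by rewrite /rkc_kappa subSS subSS subn0. Qed.
Lemma muE j : mu j.+2 = 2%:R * w1 * b j.+2 / b j.+1. Proof. by []. Qed.
Lemma gamE j : gam j.+2 = - (mu j.+2 * rkc_a p s eps j.+1). Proof. by []. Qed.

Lemma step_conv (V : lmodType R) (Mop : V -> V) x y r j :
  nu j.+2 *: x + kap j.+2 *: y + mu j.+2 *: Mop x + r =
  (b j.+2 / b j.+1) *: (2%:R *: (w0 *: x + w1 *: Mop x)) - (b j.+2 / b j) *: y + r.
Proof.
rewrite nuE kapE muE !scalerDr !scalerA scaleNr.
have -> : 2%:R * w0 * b j.+2 / b j.+1 = b j.+2 / b j.+1 * 2%:R * w0 by ring.
have -> : 2%:R * w1 * b j.+2 / b j.+1 = b j.+2 / b j.+1 * 2%:R * w1 by ring.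
by congr (_ + _); rewrite addrAC.
Qed.

Fixpoint qrec (r : nat -> {poly R}) (j : nat) : {poly R} :=
  match j with
  | 0 => 0
  | 1 => r 1%N
  | (m1.+1 as m2).+1 => nu j *: qrec r m2 + kap j *: qrec r m1 + mu j *: ('X * qrec r m2) + r j
  end.

Lemma qrecSS r j : qrec r j.+2 = nu j.+2 *: qrec r j.+1 + kap j.+2 *: qrec r j
   + mu j.+2 *: ('X * qrec r j.+1) + r j.+2.
Proof. by []. Qed.

Lemma qrec_sum r k : qrec r k = \sum_(1 <= j < k.+1) (b k / b j) *: ((chebU R (k - j) \Po Y) * r j).
Proof.
apply: (@sum_form R _ w0 w1 (fun q => 'X * q) _ _ (fun i q => (chebU R i \Po Y) * q)).
- by move=> x y; rewrite mulrDr.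
- by move=> a x; rewrite scalerAr.
- by move=> v; rewrite /= -polyC1 comp_polyC polyC1 mul1r.
- move=> v; rewrite /= comp_polyZ comp_polyX.
  move: v => v; rewrite -!mul_polyC; ring.
- move=> i v; rewrite [chebU R i.+2]/= comp_polyB comp_polyM comp_polyZ comp_polyX.
  move: (chebU R i.+1 \Po Y) (chebU R i \Po Y) => u1 u0.
  rewrite -!mul_polyC; ring.
- exact: hb.
- by [].
- by [].
- by move=> j; rewrite -step_conv.
Qed.

Lemma qrec_hornersum r k z : (qrec r k).[z] =
  \sum_(1 <= j < k.+1) b k / b j * (chebU R (k - j)).[w0 + w1 * z] * (r j).[z].
Proof.
rewrite qrec_sum horner_sum; apply: eq_bigr => j _.
by rewrite hornerZ hornerM horner_comp !hornerE.
Qed.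

Lemma tE j : chebT R j.+2 \Po Y = 2%:R *: Y * (chebT R j.+1 \Po Y) - (chebT R j \Po Y).
Proof.
by rewrite [chebT R j.+2]/= comp_polyB comp_polyM comp_polyZ comp_polyX.
Qed.

Lemma Rm1 j : rkc_R p s eps j - 1 = b j *: ((chebT R j \Po Y) - (Tv s eps j)%:P).
Proof.
rewrite /rkc_R /rkc_a; move: (chebT R j \Po Y) => t.
rewrite -!mul_polyC; ring.
Qed.

Lemma Rrec j : rkc_R p s eps j.+2 - 1 =
  nu j.+2 *: (rkc_R p s eps j.+1 - 1) + kap j.+2 *: (rkc_R p s eps j - 1)
  + mu j.+2 *: ('X * (rkc_R p s eps j.+1 - 1)) + (mu j.+2 + gam j.+2) *: 'X.
Proof.
have h1 := hb j.+1; have h0 := hb j; have h2 := hb j.+2.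
have enu : nu j.+2 * b j.+1 = 2%:R * w0 * b j.+2 by rewrite nuE; field.
have ekap : kap j.+2 * b j = - b j.+2 by rewrite kapE; field.
have emu : mu j.+2 * b j.+1 = 2%:R * w1 * b j.+2 by rewrite muE; field.
have emg : mu j.+2 + gam j.+2 = 2%:R * w1 * b j.+2 * Tv s eps j.+1.
  by rewrite gamE /rkc_a muE; field.
rewrite !Rm1 -scalerAr !scalerA enu ekap emu emg tE Tv_SS.
move: (chebT R j.+1 \Po Y) (chebT R j \Po Y) (Tv s eps j.+1) (Tv s eps j) => t1 t0 T1 T0.
rewrite -!mul_polyC; ring.
Qed.

Definition Qp := qrec (fun j => (mu j + gam j)%:P).
Definition Wp := qrec (fun j => if (2 <= j)%N then (mu j * c j.-1)%:P else 0).

Lemma RQ k : rkc_R p s eps k - 1 = Qp k * 'X.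
Proof.
apply: (@uniq_rec R _ (fun j x y => nu j.+2 *: x + kap j.+2 *: y + mu j.+2 *: ('X * x)
   + (mu j.+2 + gam j.+2) *: 'X) (fun k => rkc_R p s eps k - 1) (fun k => Qp k * 'X) k) => //.
- rewrite Rm1 /Qp /= /Tv /= hornerE -polyC1 comp_polyC subrr scaler0 mul0r //.
- rewrite Rm1 /Qp /= /Tv /= hornerX comp_polyX /rkc_gamma /rkc_mu /=.
  rewrite -!mul_polyC; ring.
- by move=> j _; apply: Rrec.
- move=> j _; rewrite /Qp qrecSS.
  move: (qrec _ j.+1) (qrec _ j) => q1 q0.
  rewrite -!mul_polyC; ring.
Qed.

Lemma QcW k : Qp k - (c k)%:P = Wp k * 'X.
Proof.
apply: (@uniq_rec R _ (fun j x y => nu j.+2 *: x + kap j.+2 *: y + mu j.+2 *: ('X * x)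
   + (mu j.+2 * c j.+1) *: 'X) (fun k => Qp k - (c k)%:P) (fun k => Wp k * 'X) k) => //.
- by rewrite /Qp /Wp /= subrr mul0r.
- by rewrite /Qp /Wp /= /rkc_gamma /= addr0 subrr mul0r.
- move=> j _; rewrite /Qp qrecSS [c j.+2]/=.
  move: (qrec _ j.+1) (qrec _ j) => q1 q0.
  rewrite -!mul_polyC; ring.
- move=> j _; rewrite /Wp qrecSS.
  move: (qrec _ j.+1) (qrec _ j) => q1 q0.
  rewrite -!mul_polyC; ring.
Qed.

Lemma Rbar_eq k : rkc_Rbar p s eps k = Qp k.
Proof. by rewrite /rkc_Rbar RQ mulpK // polyX_eq0. Qed.

Lemma Rtilde_eq1 k : rkc_R p s eps k - 1 - c k *: 'X = Wp k * 'X^2.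
Proof. by rewrite RQ -mul_polyC -mulrBl QcW -mulrA -expr2. Qed.

Lemma Rtilde_eq k : rkc_Rtilde p s eps k = Wp k.
Proof. by rewrite /rkc_Rtilde Rtilde_eq1 mulpK // expf_neq0 // polyX_eq0. Qed.

End Main.

Lemma rkc_dSS (R : realFieldType) p s (eps : R) n (A : 'M[R]_n) dt r j :
  rkc_d p s eps A dt r j.+2 = rkc_nu p s eps j.+2 *: rkc_d p s eps A dt r j.+1
   + rkc_kappa p s eps j.+2 *: rkc_d p s eps A dt r j
   + rkc_mu p s eps j.+2 *: ((dt *: A) *m rkc_d p s eps A dt r j.+1) + r j.+2.
Proof. by []. Qed.

Theorem lemma3p1 (R : realFieldType) (p s : nat) (eps : R)
  (hp : (p == 1%N) || (p == 2%N)) (hs : (1 <= s)%N) (hs2 : p = 2%N -> (2 <= s)%N)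
  (heps : 0 <= eps)
  (n : nat) (A : 'M[R]_n) (dt : R) (hdt : 0 < dt) (r : nat -> 'cV[R]_n) :
  let w0 := rkc_w0 s eps in
  let w1 := rkc_w1 p s eps in
  let b := rkc_b p s eps in
  let mu := rkc_mu p s eps in
  let gamma := rkc_gamma p s eps in
  let c := rkc_c p s eps in
  let d := rkc_d p s eps A dt r in
  (* (i) *)
  (forall k, (1 <= k <= s)%N ->
     d k = \sum_(1 <= j < k.+1)
             (b k / b j) *: (mxpeval (chebU R (k - j)) (w0%:M + (w1 * dt) *: A) *m r j))
  (* (ii) *)
  /\ (forall k, (1 <= k <= s)%N ->
     (forall z : R, z != 0 ->
        ((rkc_R p s eps k).[z] - 1) / z
          = \sum_(1 <= j < k.+1) b k / b j * (chebU R (k - j)).[w0 + w1 * z] * (mu j + gamma j)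
        /\ ((rkc_R p s eps k).[z] - 1 - c k * z) / z ^+ 2
          = \sum_(2 <= j < k.+1) b k / b j * (chebU R (k - j)).[w0 + w1 * z] * mu j * c j.-1)
     /\ rkc_R p s eps k - 1 = rkc_Rbar p s eps k * 'X
     /\ rkc_R p s eps k - 1 - c k *: 'X = rkc_Rtilde p s eps k * 'X^2
     /\ (forall z : R,
          (rkc_Rbar p s eps k).[z]
          = \sum_(1 <= j < k.+1) b k / b j * (chebU R (k - j)).[w0 + w1 * z] * (mu j + gamma j))
     /\ (forall z : R,
          (rkc_Rtilde p s eps k).[z]
          = \sum_(2 <= j < k.+1) b k / b j * (chebU R (k - j)).[w0 + w1 * z] * mu j * c j.-1))
  (* (iii) *)
  /\ (forall rr : 'cV[R]_n,
        (forall j, (1 <= j <= s)%N -> r j = (mu j + gamma j) *: rr) ->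
        forall k, (1 <= k <= s)%N ->
          d k = mxpeval (rkc_Rbar p s eps k) (dt *: A) *m rr).
Proof.
move=> w0 w1 b mu gamma c d.
have hbn := @hb R p s eps heps.
have RbE := @Rbar_eq R p s eps heps.
have RtE := @Rtilde_eq R p s eps heps.
have RtE1 := @Rtilde_eq1 R p s eps heps.
have RQE := @RQ R p s eps heps.
have qhs := @qrec_hornersum R p s eps heps.
split.
  move=> k _.
  pose M := w0%:M + (w1 * dt) *: A.
  have hMv : forall v : 'cV[R]_n, M *m v = w0 *: v + w1 *: ((dt *: A) *m v).
    by move=> v; rewrite /M mulmxDl mul_scalar_mx -!scalemxAl scalerA.
  apply: (@sum_form R _ w0 w1 (fun v => (dt *: A) *m v) _ _
     (fun i v => mxpeval (chebU R i) M *m v)).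
  - by move=> x y; rewrite mulmxDr.
  - by move=> a x; rewrite scalemxAr.
  - by move=> v; rewrite /= mxpeval1 mul1mx.
  - by move=> v; rewrite [chebU R 1]/= -['X]mulr1 mxpevalZ mxpevalXM mxpeval1 mulmx1 -(scalemxAl 2%:R M v) hMv.
  - have chebU_SS : forall i, chebU R i.+2 = 2%:R *: 'X * chebU R i.+1 - chebU R i by [].
    move=> i v; rewrite chebU_SS mxpevalB -scalerAl mxpevalZ mxpevalXM.
    by rewrite mulmxBl -(scalemxAl 2%:R (M *m _) v) -mulmxA hMv.
  - exact: hbn.
  - by [].
  - by [].
  - by move=> j; rewrite /d rkc_dSS -step_conv.
split.
  move=> k hk.
  have hk1 : (1 <= k)%N by case/andP: hk.
  have EQ : forall z, (rkc_Rbar p s eps k).[z] = \sum_(1 <= j < k.+1)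
      b k / b j * (chebU R (k - j)).[w0 + w1 * z] * (mu j + gamma j).
    by move=> z; rewrite RbE /Qp /= qhs; apply: eq_bigr => j _; rewrite hornerC.
  have ET : forall z, (rkc_Rtilde p s eps k).[z] = \sum_(2 <= j < k.+1)
      b k / b j * (chebU R (k - j)).[w0 + w1 * z] * mu j * c j.-1.
    move=> z; rewrite RtE /Wp qhs big_ltn // hornerC mulr0 add0r.
    apply: eq_big_nat => j /andP [hj _]; rewrite hj hornerC mulrA //.
  split.
    move=> z hz; split.
      rewrite -EQ RbE.
      have -> : (rkc_R p s eps k).[z] - 1 = (rkc_R p s eps k - 1).[z] by rewrite !hornerE.
      by rewrite RQE hornerMX mulfK.
    rewrite -ET RtE.
    have -> : (rkc_R p s eps k).[z] - 1 - c k * z = (rkc_R p s eps k - 1 - c k *: 'X).[z].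
      by rewrite !hornerE.
    by rewrite RtE1 hornerM hornerXn mulfK // expf_neq0.
  split; first by rewrite RQE RbE.
  split; first by rewrite RtE1 RtE.
  by split.
move=> rr hr k hk.
have hs1 := hs.
rewrite RbE.
apply: (@uniq_rec R _ (fun j x y => rkc_nu p s eps j.+2 *: x + rkc_kappa p s eps j.+2 *: y
   + mu j.+2 *: ((dt *: A) *m x) + (mu j.+2 + gamma j.+2) *: rr)
   d (fun k => mxpeval (Qp R p s eps k) (dt *: A) *m rr) s _ _ _ _ k) => //.
- by rewrite /d /= /Qp /= /= mxpeval0 mul0mx.
- by rewrite /d /= hr ?hs // /Qp /= /= mxpevalC -scalemxAl mul1mx.
- by move=> j hj; rewrite /d rkc_dSS hr // hj andbT.
- move=> j _; rewrite /Qp qrecSS !mxpevalD !mxpevalZ mxpevalXM mxpevalC.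
  by rewrite !mulmxDl -!scalemxAl mulmxA mul1mx.
- by case/andP: hk.
Qed.
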